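(* Let $E$ be a finite-dimensional quantum system, $T$ a qubit register with computational basis $\{\ket{0},\ket{1}\}$, and for $a,b\in\{0,1\}$ let $\sigma_{E|ab}$ be density operators on $E$. For $a,b\in\{0,1\}$ define $$\rho_{ET|ab}=\tfrac12\,\sigma_{E|ab}\otimes\ket{0}\!\bra{0}_T+\tfrac12\,\sigma_{E|\overline a\,\overline b}\otimes\ket{1}\!\bra{1}_T,$$ where $\overline a=a\oplus 1$, $\overline b=b\oplus1$. Fix a block size $k\ge1$, let $\mathbf{ET}=E_1T_1\cdots E_kT_k$ denote $k$ copies of $ET$, and for a string $\mathbf m=(m_1,\dots,m_k)\in\{0,1\}^k$ with bitwise complement $\overline{\mathbf m}$ define $$\rho_{\mathbf{ET}|\mathbf{mm}}=\rho_{ET|m_1m_1}\otimes\cdots\otimes\rho_{ET|m_km_k},\qquad \rho_{\mathbf{ET}|\overline{\mathbf m}\,\overline{\mathbf m}}=\rho_{ET|\overline{m_1}\,\overline{m_1}}\otimes\cdots\otimes\rho_{ET|\overline{m_k}\,\overline{m_k}}.$$ Define the classical-quantum states on a classical bit register $C$ and $\mathbf{ET}$: $$\widetilde\rho_{C\mathbf{ET}}=\tfrac12\ket{0}\!\bra{0}_C\otimes\rho_{\mathbf{ET}|\mathbf{mm}}+\tfrac12\ket{1}\!\bra{1}_C\otimes\rho_{\mathbf{ET}|\overline{\mathbf m}\,\overline{\mathbf m}},\qquad \overline\rho_{C\mathbf{ET}}=\tfrac12\ket{0}\!\bra{0}_C\otimes\rho_{ET|00}^{\otimes k}+\tfrac12\ket{1}\!\bra{1}_C\otimes\rho_{ET|11}^{\otimes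 k}.$$ Then for every $\mathbf m\in\{0,1\}^k$, $H(C|\mathbf{ET})_{\widetilde\rho}=H(C|\mathbf{ET})_{\overline\rho}$.
   Context: $H(C|\mathbf{ET})_\rho=H(C\mathbf{ET})_\rho-H(\mathbf{ET})_\rho$ denotes the conditional von Neumann entropy of the state $\rho$. *)

(* Defs.v *)
From HB Require Import structures.
From mathcomp Require Import all_boot all_order all_algebra.
From mathcomp Require Import reals exp.
From mathcomp Require Import complex mxtens.

Set Implicit Arguments.
Unset Strict Implicit.
Unset Printing Implicit Defensive.

Import Order.TTheory GRing.Theory Num.Theory.
Local Open Scope ring_scope.

Section QDefs.
Variable R : realType.
Local Notation C := (R[i]).

Definition adjmx {m n} (A : 'M[C]_(m, n)) : 'M[C]_(n, m) := (map_mx Num.conj A)^T.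

Definition density {n} (A : 'M[C]_n) : Prop :=
  [/\ adjmx A = A,
      (forall v : 'cV[C]_n, 0 <= (adjmx v *m A *m v) 0 0)
    & \tr A = 1].

(** eigenvalues (with algebraic multiplicity) = roots of the characteristic
    polynomial, which splits over the algebraically closed field C *)
Definition spectrum {n} (A : 'M[C]_n) : seq C :=
  sval (closed_field_poly_normal (char_poly A)).

Definition xlog2x (x : R) : R := if x == 0 then 0 else x * (ln x / ln 2).

Definition vN_entropy {n} (A : 'M[C]_n) : R :=
  - \sum_(z <- spectrum A) xlog2x (complex.Re z).

(** partial trace over the first tensor factor of C^m (x) C^n *)
Definition ptrace1 {m n} (A : 'M[C]_(m * n)) : 'M[C]_n :=
  \sum_(i < m) \matrix_(j, l) A (mxtens_index (i, j)) (mxtens_index (i, l)).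

(** conditional entropy H(X|Y) = H(XY) - H(Y), X the first factor *)
Definition cond_entropy {m n} (A : 'M[C]_(m * n)) : R :=
  vN_entropy A - vN_entropy (ptrace1 A).

Definition proj0 : 'M[C]_2 := delta_mx 0 0.
Definition proj1 : 'M[C]_2 := delta_mx 1 1.

Definition rhoET {d} (sigma : bool -> bool -> 'M[C]_d) (a b : bool)
  : 'M[C]_(d * 2) :=
  (2%:R^-1) *: tensmx (sigma a b) proj0
  + (2%:R^-1) *: tensmx (sigma (~~ a) (~~ b)) proj1.

Fixpoint pw (n k : nat) : nat := if k is k'.+1 then n * pw n k' else 1%N.

Fixpoint ktens {n} (k : nat) (F : nat -> 'M[C]_n) : 'M[C]_(pw n k) :=
  match k return 'M[C]_(pw n k) with
  | 0 => 1%:M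
  | k'.+1 => tensmx (F 0%N) (ktens k' (fun i => F i.+1))
  end.

Definition cq_state {n} (r0 r1 : 'M[C]_n) : 'M[C]_(2 * n) :=
  (2%:R^-1) *: tensmx proj0 r0 + (2%:R^-1) *: tensmx proj1 r1.

Definition rho_tilde {d k} (sigma : bool -> bool -> 'M[C]_d)
  (m : k.-tuple bool) : 'M[C]_(2 * pw (d * 2) k) :=
  cq_state
    (ktens k (fun i => rhoET sigma (nth false m i) (nth false m i)))
    (ktens k (fun i => rhoET sigma (~~ nth false m i) (~~ nth false m i))).

Definition rho_bar {d} (k : nat) (sigma : bool -> bool -> 'M[C]_d)
  : 'M[C]_(2 * pw (d * 2) k) :=
  cq_state (ktens k (fun _ => rhoET sigma false false))
           (ktens k (fun _ => rhoET sigma true true)).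

End QDefs.

(* Main.v *)
Require Import Defs.
From HB Require Import structures.
From mathcomp Require Import all_boot all_order all_algebra.
From mathcomp Require Import reals exp.
From mathcomp Require Import complex mxtens.

Set Implicit Arguments.
Unset Strict Implicit.
Unset Printing Implicit Defensive.
Import Order.TTheory GRing.Theory Num.Theory.
Local Open Scope ring_scope.

Lemma char_poly_conj (F : comNzRingType) n (W A : 'M[F]_n) :
  W *m W = 1%:M -> char_poly (W *m A *m W) = char_poly A.
Proof.
move=> WW.
set Wp := map_mx (@polyC F) W.
have WpWp : Wp *m Wp = 1%:M by rewrite -map_mxM WW map_mx1.
rewrite /char_poly.
have -> : char_poly_mx (W *m A *m W) = Wp *m char_poly_mx A *m Wp.
  rewrite /char_poly_mx !map_mxM -/Wp mulmxBr mulmxBl.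
  idtac.
  by rewrite [Wp *m _%:M]scalar_mxC -[_%:M *m Wp *m Wp]mulmxA WpWp mulmx1.
rewrite !det_mulmx mulrC mulrA -det_mulmx WpWp det1 mul1r //.
Qed.

Section S.
Variable R : realType.
Local Notation C := (R[i]).

Lemma tens11 m n : tensmx (1%:M : 'M[C]_m) (1%:M : 'M[C]_n) = 1%:M.
Proof.
apply/matrixP=> i j.
case: (mxtens_indexP i)=> i0 i1; case: (mxtens_indexP j)=> j0 j1.
rewrite tensmxE !mxE (can_eq (@mxtens_indexK _ _)) xpair_eqE.
by case: (i0 == j0); case: (i1 == j1); rewrite /= ?mulr1 ?mulr0 ?mul0r.
Qed.

Lemma eq_ktens n k (F G : nat -> 'M[C]_n) :
  (forall i, F i = G i) -> ktens k F = ktens k G.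
Proof.
elim: k F G => [//|k IH] F G FG /=.
by rewrite FG (IH (fun i => F i.+1) (fun i => G i.+1)).
Qed.

Lemma ktens_mul n k (F G : nat -> 'M[C]_n) :
  ktens k (fun i => F i *m G i) = ktens k F *m ktens k G.
Proof.
elim: k F G => [|k IH] F G /=; first by rewrite mul1mx.
by rewrite tensmx_mul -IH.
Qed.

Lemma ktens1 n k : ktens k (fun _ => (1%:M : 'M[C]_n)) = 1%:M.
Proof.
elim: k => [//|k IH] /=. by rewrite IH tens11.
Qed.

Definition Xm : 'M[C]_2 := \matrix_(i, j) (i != j)%:R.

Lemma Xm2 : Xm *m Xm = 1%:M.
Proof.
apply/matrixP=> i j; rewrite !mxE !big_ord_recl big_ord0 !mxE.
move: i j; do 2! case=> [[|[|?]] //= ?].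
all: by rewrite ?mulr0 ?mulr1 ?addr0 ?add0r.
Qed.

Lemma Xm_p0 : Xm *m proj0 R *m Xm = proj1 R.
Proof.
apply/matrixP=> i j; rewrite !mxE !big_ord_recl big_ord0 !mxE.
rewrite !big_ord_recl big_ord0 !mxE.
move: i j; do 2! case=> [[|[|?]] //= ?].
all: by rewrite ?big_ord0 ?mulr0 ?mulr1 ?mul0r ?mul1r ?addr0 ?add0r.
Qed.

Lemma Xm_p1 : Xm *m proj1 R *m Xm = proj0 R.
Proof.
apply/matrixP=> i j; rewrite !mxE !big_ord_recl big_ord0 !mxE.
rewrite !big_ord_recl big_ord0 !mxE.
move: i j; do 2! case=> [[|[|?]] //= ?].
all: by rewrite ?big_ord0 ?mulr0 ?mulr1 ?mul0r ?mul1r ?addr0 ?add0r.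
Qed.


Definition Xb d (b : bool) : 'M[C]_(d * 2) :=
  if b then tensmx (1%:M : 'M[C]_d) Xm else 1%:M.

Lemma Xb2 d b : Xb d b *m Xb d b = 1%:M.
Proof.
case: b; rewrite /Xb ?mul1mx //.
by rewrite tensmx_mul mul1mx Xm2 tens11.
Qed.

Lemma conj_tens d (S : 'M[C]_d) (P : 'M[C]_2) :
  tensmx 1%:M Xm *m tensmx S P *m tensmx 1%:M Xm = tensmx S (Xm *m P *m Xm).
Proof. by rewrite !tensmx_mul mul1mx mulmx1. Qed.

Lemma conj_lin n (M A B : 'M[C]_n) (a : C) :
  M *m (a *: A + a *: B) *m M = a *: (M *m A *m M) + a *: (M *m B *m M).
Proof. by rewrite mulmxDr mulmxDl -!scalemxAr -!scalemxAl. Qed.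

Lemma Xb_rho d (sigma : bool -> bool -> 'M[C]_d) a :
  Xb d true *m rhoET sigma a a *m Xb d true = rhoET sigma (~~ a) (~~ a).
Proof.
rewrite /rhoET /Xb.
rewrite conj_lin.
rewrite !conj_tens.
rewrite Xm_p0 Xm_p1 !negbK; exact: addrC.
Qed.
Lemma conjW n (U r0 r1 : 'M[C]_n) :
  cq_state (U *m r0 *m U) (U *m r1 *m U) =
  tensmx (1%:M : 'M[C]_2) U *m cq_state r0 r1 *m tensmx (1%:M : 'M[C]_2) U.
Proof.
rewrite /cq_state conj_lin.
rewrite !tensmx_mul.
by rewrite !mul1mx !mulmx1.
Qed.
Lemma ptrace_cq n (r0 r1 : 'M[C]_n) :
  ptrace1 (cq_state r0 r1) = 2%:R^-1 *: r0 + 2%:R^-1 *: r1.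
Proof.
apply/matrixP=> j l; rewrite /ptrace1 summxE.
rewrite !big_ord_recl big_ord0.
rewrite !mxE !mxtens_indexK /=.
by rewrite !(mulr0, mul0r, mulr1, mul1r, addr0, add0r).
Qed.
Lemma vN_conj n (A W : 'M[C]_n) : W *m W = 1%:M ->
  vN_entropy (W *m A *m W) = vN_entropy A.
Proof. by move=> WW; rewrite /vN_entropy /spectrum char_poly_conj. Qed.

End S.

Theorem lemma1 (R : realType) (d k : nat)
  (sigma : bool -> bool -> 'M[R[i]]_d)
  (hsigma : forall a b : bool, density (sigma a b))
  (hk : (0 < k)%N) (m : k.-tuple bool) :
  cond_entropy (rho_tilde sigma m) = cond_entropy (rho_bar k sigma).
Proof.
set U := ktens k (fun i => Xb R d (nth false m i)).
have T0 : ktens k (fun i => rhoET sigma (nth false m i) (nth false m i))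
    = U *m ktens k (fun _ => rhoET sigma false false) *m U.
  rewrite /U -!ktens_mul; apply: eq_ktens => i.
  by case: (nth false m i); rewrite ?Xb_rho // /Xb mul1mx mulmx1.
have T1 : ktens k (fun i => rhoET sigma (~~ nth false m i) (~~ nth false m i))
    = U *m ktens k (fun _ => rhoET sigma true true) *m U.
  rewrite /U -!ktens_mul; apply: eq_ktens => i.
  by case: (nth false m i); rewrite ?Xb_rho // /Xb mul1mx mulmx1.
have UU : U *m U = 1%:M.
  by rewrite /U -ktens_mul (eq_ktens _ (fun i => Xb2 R _ _)) ktens1.
clearbody U.
pose B0 := ktens k (fun _ => rhoET sigma false false).
pose B1 := ktens k (fun _ => rhoET sigma true true).
have Ht0 : rho_tilde sigma m = cq_state (U *m B0 *m U) (U *m B1 *m U).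
  exact: (f_equal2 (@cq_state R _) T0 T1).
have Ht : rho_tilde sigma m = tensmx (1%:M : 'M_2) U *m rho_bar k sigma *m tensmx (1%:M : 'M_2) U.
  exact: (etrans Ht0 (conjW U B0 B1)).
have WW : tensmx (1%:M : 'M[R[i]]_2) U *m tensmx (1%:M : 'M_2) U = 1%:M.
  by rewrite tensmx_mul mul1mx UU tens11.
have Hp : ptrace1 (rho_tilde sigma m) = U *m ptrace1 (rho_bar k sigma) *m U.
  rewrite Ht0 ptrace_cq.
  rewrite /rho_bar ptrace_cq.
  exact: esym (conj_lin U B0 B1 (2%:R^-1)).
have E1 : vN_entropy (rho_tilde sigma m) = vN_entropy (rho_bar k sigma).
  exact: (etrans (congr1 (@vN_entropy R _) Ht) (vN_conj (rho_bar k sigma) WW)).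
have E2 : vN_entropy (ptrace1 (rho_tilde sigma m)) = vN_entropy (ptrace1 (rho_bar k sigma)).
  exact: (etrans (congr1 (@vN_entropy R _) Hp) (vN_conj (ptrace1 (rho_bar k sigma)) UU)).
exact: (congr2 (fun a b => a - b) E1 E2).
Qed.
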